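(* Let $((P,\omega),B)\in \mathrm{Gr}^{\rm po}_{2,1}(\Gamma_{\mathbb R})\times\Gamma_{\mathbb R}$ with $\omega,B\in\Gamma'_{\mathbb R}\oplus\mathbb R v$. Then there is $\sigma\in\Gamma_{\mathbb C}$ with $P=P_\sigma$, $\langle\mathrm{Im}(\sigma),v\rangle=0$ and $\langle\mathrm{Re}(\sigma),v\rangle\neq0$. Define $$\sigma^{\vee}:=\frac{1}{\langle \mathrm{Re}(\sigma),v\rangle}\Big(\mathrm{pr}(B+i\omega)-\tfrac12(B+i\omega)^2v+v^*\Big),$$ $$B^{\vee}+i\omega^{\vee}:=\frac{1}{\langle \mathrm{Re}(\sigma),v\rangle}\Big(\mathrm{pr}(\sigma)-\langle\sigma,B\rangle v\Big),$$ with $B^\vee,\omega^\vee\in\Gamma_{\mathbb R}$. Then: - $((P_{\sigma^\vee},\omega^\vee),B^\vee)\in \mathrm{Gr}^{\rm po}_{2,1}(\Gamma_{\mathbb R})\times\Gamma_{\mathbb R}$; - $\tilde\xi(\gamma((P,\omega),B))=\gamma((P_{\sigma^\vee},\omega^\vee),B^\vee)$. In particular, the $\tilde\xi$-mirror of a point of $\gamma(\mathrm{Gr}^{\rm po}_{2,1}(\Gamma_{\mathbb R})\times\Gamma_{\mathbb R})$ satisfying these hypotheses again lies in $\gamma(\mathrm{Gr}^{\rm po}_{2,1}(\Gamma_{\mathbb R})\times\Gamma_{\mathbb R})$.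
   Context: $\Gamma$ is a lattice of signature $(3,b-3)$ with a fixed orthogonal splitting $\Gamma=\Gamma'\oplus U'$, where $U'$ is a hyperbolic plane. $U$ is a further hyperbolic plane with standard basis $(w,w^* )$ ($w^2={w^*}^2=0$, $\langle w,w^*\rangle=1$). An isometry $U'\cong U$ is fixed, and $(v,v^* )$ is the basis of $U'$ corresponding to $(w,w^* )$. $\mathrm{pr}:\Gamma_{\mathbb R}\to\Gamma'_{\mathbb R}$ is the orthogonal projection, extended complex-linearly. The form is extended complex-bilinearly to $\Gamma_{\mathbb C}$. For $\sigma\in\Gamma_{\mathbb C}$ with $\sigma^2=0$ and $(\sigma+\bar\sigma)^2>0$, $P_\sigma$ is the plane spanned by $\mathrm{Re}\,\sigma,\mathrm{Im}\,\sigma$, oriented by this basis. $\mathrm{Gr}^{\rm po}_{2,1}(\Gamma_{\mathbb R})=\{(P,\omega): P$ an oriented positive definite plane in $\Gamma_{\mathbb R}$, $\omega\in P^\perp$, $\omega^2>0\}$. $\mathrm{Gr}^{\rm po}_{2,2}(\Gamma_{\mathbb R}\oplus U_{\mathbb R})$ is the set of pairs $(H_1,H_2)$ of orthogonal oriented positive definite planes in $\Gamma_{\mathbb R}\oplus U_{\mathbb R}$. The map $\gamma:\mathrm{Gr}^{\rm po}_{2,1}(\Gamma_{\mathbb R})\times\Gamma_{\mathbb R}\to \mathrm{Gr}^{\rm po}_{2,2}(\Gamma_{\mathbb R}\oplus U_{\mathbb R})$ sends $((P,\omega),B)$ to $(H_1,H_2)$ where: - $H_1=\{x-\langle x,B\rangle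 w: x\in P\}$, oriented via $P$; - $H_2$ has the ordered basis $\big(\tfrac12(\omega^2-B^2)w+w^*+B,\ \omega-\langle\omega,B\rangle w\big)$. $\xi\in \mathrm O(\Gamma\oplus U)$ is the identity on $\Gamma'$ and interchanges $U$ and $U'$: $v\leftrightarrow w$, $v^*\leftrightarrow w^*$. $\iota(H_1,H_2)=(H_2,H_1)$. The mirror map is $\tilde\xi=\iota\circ\xi$, acting on $\mathrm{Gr}^{\rm po}_{2,2}(\Gamma_{\mathbb R}\oplus U_{\mathbb R})$. *)

(* Defs.v *)
From HB Require Import structures.
From mathcomp Require Import all_boot all_order all_algebra.
From mathcomp Require Import complex.
Set Implicit Arguments. Unset Strict Implicit. Unset Printing Implicit Defensive.
Import Order.TTheory GRing.Theory Num.Theory.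
Local Open Scope ring_scope.
Local Open Scope complex_scope.

(* Coordinates.  Gamma = Gamma' (+) U', Gamma' of rank n with integral       *)
(* symmetric Gram matrix G, U' = Z v (+) Z v*.                               *)
(* An element of Gamma_K (K = R or C) is a row vector  row_mx x' u : 'rV_(n+2)*)
(* standing for x' + u_0 v + u_1 v*  (x' in Gamma'_K).                       *)
(* An element of (Gamma (+) U)_K is a row vector row_mx x u : 'rV_(n+2+2)    *)
(* standing for x + u_0 w + u_1 w*  (x in Gamma_K).                          *)

Notation gam K n := 'rV[K]_(n + 2).
Notation gamU K n := 'rV[K]_(n + 2 + 2).

Definition hypU (K : pzRingType) : 'M[K]_2 :=
  \matrix_(i < 2, j < 2) (if i != j then 1 else 0).

Definition gram_full (n : nat) (G : 'M[int]_n) : 'M[int]_(n + 2) :=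
  block_mx G 0 0 (hypU int).

Section Forms.
Variables (K : comNzRingType) (n : nat) (G : 'M[int]_n).

Definition intmx (m : nat) (S : 'M[int]_m) : 'M[K]_m := map_mx (fun z => z%:~R) S.

Definition gform (x y : gam K n) : K :=
  (x *m intmx (gram_full G) *m y^T) 0 0.

Definition gUform (x y : gamU K n) : K :=
  (x *m block_mx (intmx (gram_full G)) 0 0 (hypU K) *m y^T) 0 0.

Definition e0 : 'rV[K]_2 := \row_(j < 2) (if j == 0 then 1 else 0).
Definition e1 : 'rV[K]_2 := \row_(j < 2) (if j == 1 then 1 else 0).

Definition vv : gam K n := row_mx 0 e0.
Definition vvs : gam K n := row_mx 0 e1.
Definition ww : gamU K n := row_mx 0 e0.
Definition wws : gamU K n := row_mx 0 e1.
Definition embU (x : gam K n) : gamU K n := row_mx x 0.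

Definition pr (x : gam K n) : gam K n := row_mx (lsubmx x) 0.

(* xi : identity on Gamma', v <-> w, v* <-> w* *)
Definition xi (x : gamU K n) : gamU K n :=
  row_mx (row_mx (lsubmx (lsubmx x)) (rsubmx x)) (rsubmx (lsubmx x)).
End Forms.

Definition has_signature (R : realFieldType) (N p : nat) (S : 'M[R]_N) :=
  (p <= N)%N /\ S^T = S /\
  exists M : 'M[R]_N, M \in unitmx /\
    M *m S *m M^T = diag_mx (\row_(i < N) (if (i < p)%N then 1 else -1)).

Section Real.
Variables (R : rcfType) (n : nat) (G : 'M[int]_n).
Local Notation q := (@gform R n G).

Definition posdef_pair (m : nat) (f : 'rV[R]_m -> 'rV[R]_m -> R) (x y : 'rV[R]_m) :=
  forall a b : R, (a != 0) || (b != 0) ->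
    0 < f (a *: x + b *: y) (a *: x + b *: y).

Definition same_oplane (m : nat) (p1 p2 : 'rV[R]_m * 'rV[R]_m) :=
  exists a b c d : R,
    p2.1 = a *: p1.1 + b *: p1.2 /\ p2.2 = c *: p1.1 + d *: p1.2 /\
    0 < a * d - b * c.

(* ((P, omega), B) in Gr^po_{2,1}(Gamma_R) x Gamma_R, P given by an
   ordered (orienting) basis (x, y) *)
Definition in_Gr21 (x y om : gam R n) :=
  posdef_pair q x y /\ q x om = 0 /\ q y om = 0 /\ 0 < q om om.

(* gamma((P, omega), B) = (H1, H2), each given by an ordered basis *)
Definition gammaH1 (x y B : gam R n) : gamU R n * gamU R n :=
  (embU x - q x B *: ww R n, embU y - q y B *: ww R n).
Definition gammaH2 (om B : gam R n) : gamU R n * gamU R n :=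
  ((2^-1 * (q om om - q B B)) *: ww R n + wws R n + embU B,
   embU om - q om B *: ww R n).
Definition gammaG (x y om B : gam R n) :=
  (gammaH1 x y B, gammaH2 om B).

Definition same_pair (H H' : (gamU R n * gamU R n) * (gamU R n * gamU R n)) :=
  same_oplane H.1 H'.1 /\ same_oplane H.2 H'.2.

(* xi~ = iota o xi, on bases *)
Definition xi_tilde (H : (gamU R n * gamU R n) * (gamU R n * gamU R n)) :=
  ((xi H.2.1, xi H.2.2), (xi H.1.1, xi H.1.2)).

Definition ReG (s : gam R[i] n) : gam R n := map_mx (@complex.Re R) s.
Definition ImG (s : gam R[i] n) : gam R n := map_mx (@complex.Im R) s.
Definition cplx (x y : gam R n) : gam R[i] n := map2_mx (@Complex R) x y.
Definition conjG (s : gam R[i] n) : gam R[i] n := map_mx (fun z : R[i] => Complex (complex.Re z) (- complex.Im z)) s.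

(* sigma in Gamma_C with sigma^2 = 0 and (sigma + conj sigma)^2 > 0,
   so that P_sigma (ordered basis (Re sigma, Im sigma)) is defined *)
Definition period (s : gam R[i] n) :=
  gform G s s = 0 /\
  exists r : R, gform G (s + conjG s) (s + conjG s) = r%:C /\ 0 < r.

Definition sigma_dual (s : gam R[i] n) (om B : gam R n) : gam R[i] n :=
  let Z := cplx B om in
  ((q (ReG s) (vv R n))^-1)%:C *:
    (pr Z - (2^-1 * gform G Z Z) *: vv R[i] n + vvs R[i] n).
Definition Bom_dual (s : gam R[i] n) (B : gam R n) : gam R[i] n :=
  ((q (ReG s) (vv R n))^-1)%:C *:
    (pr s - gform G s (cplx B 0) *: vv R[i] n).
End Real.

(* Main.v *)
Require Import Defs.
From HB Require Import structures.
From mathcomp Require Import all_boot all_order all_algebra.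
From mathcomp Require Import complex.
From mathcomp Require Import ring lra.
Set Implicit Arguments. Unset Strict Implicit. Unset Printing Implicit Defensive.
Import Order.TTheory GRing.Theory Num.Theory.
Local Open Scope ring_scope.

Section Base.
Variables (K : comNzRingType) (n : nat) (G : 'M[int]_n).
Local Notation q := (@gform K n G).
Implicit Types (u w z : gam K n) (H : gamU K n).

Lemma q_addl u w z : q (u + w) z = q u z + q w z.
Proof. by rewrite /gform !mulmxDl mxE. Qed.
Lemma q_scalel a u z : q (a *: u) z = a * q u z.
Proof. by rewrite /gform -!scalemxAl mxE. Qed.
Lemma q_addr u w z : q z (u + w) = q z u + q z w.
Proof. by rewrite /gform linearD /= mulmxDr mxE. Qed.
Lemma q_scaler a u z : q z (a *: u) = a * q z u.
Proof. by rewrite /gform linearZ /= -scalemxAr mxE. Qed.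
Lemma q_oppl u z : q (- u) z = - q u z.
Proof. by rewrite -scaleN1r q_scalel mulN1r. Qed.
Lemma q_oppr u z : q z (- u) = - q z u.
Proof. by rewrite -scaleN1r q_scaler mulN1r. Qed.
Lemma q_subl u w z : q (u - w) z = q u z - q w z.
Proof. by rewrite q_addl q_oppl. Qed.
Lemma q_subr u w z : q z (u - w) = q z u - q z w.
Proof. by rewrite q_addr q_oppr. Qed.
Lemma q_0l z : q 0 z = 0.
Proof. by rewrite -(scale0r 0) q_scalel mul0r. Qed.
Lemma q_0r z : q z 0 = 0.
Proof. by rewrite -(scale0r 0) q_scaler mul0r. Qed.

Lemma gformE u w : q u w =
  \sum_j \sum_i u 0 i * intmx K (gram_full G) i j * w 0 j.
Proof.
rewrite /gform !mxE; apply: eq_bigr => j _; rewrite !mxE mulr_suml.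
by apply: eq_bigr => i _.
Qed.

Lemma intmx_block :
  intmx K (gram_full G) = block_mx (intmx K G) 0 0 (hypU K).
Proof.
rewrite /intmx /gram_full map_block_mx; congr block_mx.
- by apply/matrixP => i j; rewrite !mxE.
- by apply/matrixP => i j; rewrite !mxE.
- by apply/matrixP => i j; rewrite !mxE; case: ifP.
Qed.

Definition qG (a b : 'rV[K]_n) := (a *m intmx K G *m b^T) 0 0.

Lemma hypU_form (a b : 'rV[K]_2) :
  (a *m hypU K *m b^T) 0 0 = a 0 0 * b 0 1 + a 0 1 * b 0 0.
Proof.
rewrite !mxE !big_ord_recl big_ord0 !mxE !big_ord_recl !big_ord0 /= !mxE /=.
rewrite !mulr0 !mulr1 !add0r !addr0 addrC.
have -> : (0 : 'I_2) = ord0 by apply: val_inj.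
by have -> : (1 : 'I_2) = lift ord0 ord0 by apply: val_inj.
Qed.

Lemma q_coord u w : q u w =
  qG (lsubmx u) (lsubmx w) + (rsubmx u 0 0 * rsubmx w 0 1 + rsubmx u 0 1 * rsubmx w 0 0).
Proof.
rewrite -{1}[u]hsubmxK -{1}[w]hsubmxK /gform intmx_block mul_row_block tr_row_mx mul_row_col.
rewrite ?mulmx0 ?addr0 ?mul0mx ?add0r mxE -hypU_form. done.
Qed.


Lemma ord2_0 : (0 : 'I_2) = ord0. Proof. by apply: val_inj. Qed.

Lemma q_vv u : q u (vv K n) = rsubmx u 0 1.
Proof.
rewrite q_coord /vv row_mxKl row_mxKr /qG trmx0 mulmx0 mxE.
by rewrite !mxE /= ?mulr0 ?mulr1 ?mul0r ?mul1r ?add0r ?addr0.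
Qed.
Lemma q_vvs u : q u (vvs K n) = rsubmx u 0 0.
Proof.
rewrite q_coord /vvs row_mxKl row_mxKr /qG trmx0 mulmx0 mxE.
by rewrite !mxE /= ?mulr0 ?mulr1 ?mul0r ?mul1r ?add0r ?addr0.
Qed.
Lemma q_vv_l u : q (vv K n) u = rsubmx u 0 1.
Proof.
rewrite q_coord /vv row_mxKl row_mxKr /qG !mul0mx mxE.
by rewrite !mxE /= ?mulr0 ?mulr1 ?mul0r ?mul1r ?add0r ?addr0.
Qed.
Lemma q_vvs_l u : q (vvs K n) u = rsubmx u 0 0.
Proof.
rewrite q_coord /vvs row_mxKl row_mxKr /qG !mul0mx mxE.
by rewrite !mxE /= ?mulr0 ?mulr1 ?mul0r ?mul1r ?add0r ?addr0.
Qed.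
Lemma rs_vv : rsubmx (vv K n) = e0 K. Proof. by rewrite /vv row_mxKr. Qed.
Lemma rs_vvs : rsubmx (vvs K n) = e1 K. Proof. by rewrite /vvs row_mxKr. Qed.
Lemma ls_vv : lsubmx (vv K n) = 0. Proof. by rewrite /vv row_mxKl. Qed.
Lemma ls_vvs : lsubmx (vvs K n) = 0. Proof. by rewrite /vvs row_mxKl. Qed.
Lemma rs_pr u : rsubmx (pr u) = 0. Proof. by rewrite /pr row_mxKr. Qed.
Lemma ls_pr u : lsubmx (pr u) = lsubmx u. Proof. by rewrite /pr row_mxKl. Qed.
Lemma e00 : e0 K 0 0 = 1. Proof. by rewrite !mxE. Qed.
Lemma e01 : e0 K 0 1 = 0. Proof. by rewrite !mxE. Qed.
Lemma e10 : e1 K 0 0 = 0. Proof. by rewrite !mxE. Qed.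
Lemma e11 : e1 K 0 1 = 1. Proof. by rewrite !mxE. Qed.

Lemma q_pr_pr u w : q (pr u) (pr w) =
  q u w - rsubmx u 0 0 * rsubmx w 0 1 - rsubmx u 0 1 * rsubmx w 0 0.
Proof.
rewrite !q_coord !ls_pr !rs_pr !mxE !mul0r !addr0.
ring.
Qed.

Lemma pr_add u w : pr (u + w) = pr u + pr w.
Proof. by rewrite /pr linearD add_row_mx addr0. Qed.
Lemma pr_scale a u : pr (a *: u) = a *: pr u.
Proof. by rewrite /pr linearZ scale_row_mx scaler0. Qed.
Lemma pr_opp u : pr (- u) = - pr u.
Proof. by rewrite -scaleN1r pr_scale scaleN1r. Qed.
Lemma pr_sub u w : pr (u - w) = pr u - pr w.
Proof. by rewrite pr_add pr_opp. Qed.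
Lemma pr_vv : pr (vv K n) = 0. Proof. by rewrite /pr ls_vv row_mx0. Qed.
Lemma pr_vvs : pr (vvs K n) = 0. Proof. by rewrite /pr ls_vvs row_mx0. Qed.

Lemma rs_coord (u : gam K n) : rsubmx u = rsubmx u 0 0 *: e0 K + rsubmx u 0 1 *: e1 K.
Proof.
apply/rowP => j; rewrite !mxE.
case: j => [[|[|//]] Hj] /=.
all: rewrite ?mulr1 ?mulr0 ?addr0 ?add0r; congr (u 0 _); exact: val_inj.
Qed.

Definition P1 (H : gamU K n) : 'rV[K]_n := lsubmx (lsubmx H).
Definition P2 (H : gamU K n) : 'rV[K]_2 := rsubmx (lsubmx H).
Definition P3 (H : gamU K n) : 'rV[K]_2 := rsubmx H.

Lemma gamU_ext H H' : P1 H = P1 H' -> P2 H = P2 H' -> P3 H = P3 H' -> H = H'.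
Proof.
rewrite /P1 /P2 /P3 => h1 h2 h3.
by rewrite -[H]hsubmxK -[H']hsubmxK -[lsubmx H]hsubmxK -[lsubmx H']hsubmxK h1 h2 h3.
Qed.

Lemma P1D H H' : P1 (H + H') = P1 H + P1 H'. Proof. by apply/rowP => j; rewrite !mxE. Qed.
Lemma P2D H H' : P2 (H + H') = P2 H + P2 H'. Proof. by apply/rowP => j; rewrite !mxE. Qed.
Lemma P3D H H' : P3 (H + H') = P3 H + P3 H'. Proof. by apply/rowP => j; rewrite !mxE. Qed.
Lemma P1N H : P1 (- H) = - P1 H. Proof. by apply/rowP => j; rewrite !mxE. Qed.
Lemma P2N H : P2 (- H) = - P2 H. Proof. by apply/rowP => j; rewrite !mxE. Qed.
Lemma P3N H : P3 (- H) = - P3 H. Proof. by apply/rowP => j; rewrite !mxE. Qed.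
Lemma P1Z a H : P1 (a *: H) = a *: P1 H. Proof. by apply/rowP => j; rewrite !mxE. Qed.
Lemma P2Z a H : P2 (a *: H) = a *: P2 H. Proof. by apply/rowP => j; rewrite !mxE. Qed.
Lemma P3Z a H : P3 (a *: H) = a *: P3 H. Proof. by apply/rowP => j; rewrite !mxE. Qed.

Lemma P1_emb u : P1 (embU u) = lsubmx u. Proof. by rewrite /P1 /embU row_mxKl. Qed.
Lemma P2_emb u : P2 (embU u) = rsubmx u. Proof. by rewrite /P2 /embU row_mxKl. Qed.
Lemma P3_emb u : P3 (embU u) = 0. Proof. by rewrite /P3 /embU row_mxKr. Qed.
Lemma P1_ww : P1 (ww K n) = 0. Proof. by rewrite /P1 /ww row_mxKl; apply/rowP => j; rewrite !mxE. Qed.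
Lemma P2_ww : P2 (ww K n) = 0. Proof. by rewrite /P2 /ww row_mxKl; apply/rowP => j; rewrite !mxE. Qed.
Lemma P3_ww : P3 (ww K n) = e0 K. Proof. by rewrite /P3 /ww row_mxKr. Qed.
Lemma P1_wws : P1 (wws K n) = 0. Proof. by rewrite /P1 /wws row_mxKl; apply/rowP => j; rewrite !mxE. Qed.
Lemma P2_wws : P2 (wws K n) = 0. Proof. by rewrite /P2 /wws row_mxKl; apply/rowP => j; rewrite !mxE. Qed.
Lemma P3_wws : P3 (wws K n) = e1 K. Proof. by rewrite /P3 /wws row_mxKr. Qed.
Lemma P1_xi H : P1 (xi H) = P1 H. Proof. by rewrite /P1 /xi !row_mxKl. Qed.
Lemma P2_xi H : P2 (xi H) = P3 H. Proof. by rewrite /P2 /P3 /xi row_mxKl row_mxKr. Qed.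
Lemma P3_xi H : P3 (xi H) = P2 H. Proof. by rewrite /P2 /P3 /xi row_mxKr. Qed.

Lemma lsD (u w : gam K n) : lsubmx (u + w) = lsubmx u + lsubmx w. Proof. by apply/rowP => j; rewrite !mxE. Qed.
Lemma lsN (u : gam K n) : lsubmx (- u) = - lsubmx u. Proof. by apply/rowP => j; rewrite !mxE. Qed.
Lemma lsZ a (u : gam K n) : lsubmx (a *: u) = a *: lsubmx u. Proof. by apply/rowP => j; rewrite !mxE. Qed.
Lemma rsD (u w : gam K n) : rsubmx (u + w) = rsubmx u + rsubmx w. Proof. by apply/rowP => j; rewrite !mxE. Qed.
Lemma rsN (u : gam K n) : rsubmx (- u) = - rsubmx u. Proof. by apply/rowP => j; rewrite !mxE. Qed.
Lemma rsZ a (u : gam K n) : rsubmx (a *: u) = a *: rsubmx u. Proof. by apply/rowP => j; rewrite !mxE. Qed.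

End Base.


Section Cx.
Variables (R : rcfType) (n : nat) (G : 'M[int]_n).
Local Open Scope complex_scope.
Local Notation q := (@gform R n G).
Local Notation qC := (@gform R[i] n G).
Implicit Types (u w : gam R n) (s t : gam R[i] n).

Lemma Re_sum (I : finType) (F : I -> R[i]) :
  complex.Re (\sum_i F i) = \sum_i complex.Re (F i).
Proof. by apply: (big_morph (@complex.Re R)) => // [[a b] [c d]]. Qed.
Lemma Im_sum (I : finType) (F : I -> R[i]) :
  complex.Im (\sum_i F i) = \sum_i complex.Im (F i).
Proof. by apply: (big_morph (@complex.Im R)) => // [[a b] [c d]]. Qed.

Lemma intC (z : int) : (z%:~R : R[i]) = (z%:~R : R)%:C.
Proof. by rewrite rmorph_int. Qed.

Lemma Re_qC s t : complex.Re (qC s t) = q (ReG s) (ReG t) - q (ImG s) (ImG t).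
Proof.
rewrite !gformE Re_sum -sumrB; apply: eq_bigr => j _.
rewrite Re_sum -sumrB; apply: eq_bigr => i _.
rewrite !mxE intC.
case: (s 0 i) => a b; case: (t 0 j) => c d /=; ring.
Qed.

Lemma Im_qC s t : complex.Im (qC s t) = q (ReG s) (ImG t) + q (ImG s) (ReG t).
Proof.
rewrite !gformE Im_sum -big_split; apply: eq_bigr => j _.
rewrite Im_sum -big_split; apply: eq_bigr => i _.
rewrite !mxE intC.
case: (s 0 i) => a b; case: (t 0 j) => c d /=; ring.
Qed.

Lemma cplxE (z : R[i]) : z = Complex (complex.Re z) (complex.Im z).
Proof. by case: z. Qed.

Lemma ReG_add s t : ReG (s + t) = ReG s + ReG t.
Proof. by apply/rowP => j; rewrite !mxE; case: (s 0 j); case: (t 0 j). Qed.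
Lemma ImG_add s t : ImG (s + t) = ImG s + ImG t.
Proof. by apply/rowP => j; rewrite !mxE; case: (s 0 j); case: (t 0 j). Qed.
Lemma ReG_opp s : ReG (- s) = - ReG s.
Proof. by apply/rowP => j; rewrite !mxE; case: (s 0 j). Qed.
Lemma ImG_opp s : ImG (- s) = - ImG s.
Proof. by apply/rowP => j; rewrite !mxE; case: (s 0 j). Qed.
Lemma ReG_sub s t : ReG (s - t) = ReG s - ReG t.
Proof. by rewrite ReG_add ReG_opp. Qed.
Lemma ImG_sub s t : ImG (s - t) = ImG s - ImG t.
Proof. by rewrite ImG_add ImG_opp. Qed.
Lemma ReG_scale (c : R[i]) s :
  ReG (c *: s) = complex.Re c *: ReG s - complex.Im c *: ImG s.
Proof. by apply/rowP => j; rewrite !mxE; case: c => a b; case: (s 0 j) => c d /=. Qed.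
Lemma ImG_scale (c : R[i]) s :
  ImG (c *: s) = complex.Re c *: ImG s + complex.Im c *: ReG s.
Proof.
apply/rowP => j; rewrite !mxE; case: c => a b; case: (s 0 j) => c d /=.
by rewrite addrC.
Qed.
Lemma ReG_pr s : ReG (pr s) = pr (ReG s).
Proof.
apply/rowP => k; rewrite !mxE; case: split_ordP => j _; rewrite !mxE //.
Qed.
Lemma ImG_pr s : ImG (pr s) = pr (ImG s).
Proof.
apply/rowP => k; rewrite !mxE; case: split_ordP => j _; rewrite !mxE //.
Qed.
Lemma ReG_vv : ReG (vv R[i] n) = vv R n.
Proof.
apply/rowP => k; rewrite !mxE; case: split_ordP => j _; rewrite !mxE //.
by case: ifP.
Qed.
Lemma ImG_vv : ImG (vv R[i] n) = 0.
Proof.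
apply/rowP => k; rewrite !mxE; case: split_ordP => j _; rewrite !mxE //.
by case: ifP.
Qed.
Lemma ReG_vvs : ReG (vvs R[i] n) = vvs R n.
Proof.
apply/rowP => k; rewrite !mxE; case: split_ordP => j _; rewrite !mxE //.
by case: ifP.
Qed.
Lemma ImG_vvs : ImG (vvs R[i] n) = 0.
Proof.
apply/rowP => k; rewrite !mxE; case: split_ordP => j _; rewrite !mxE //.
by case: ifP.
Qed.
Lemma ReG_cplx u w : ReG (cplx u w) = u.
Proof. by apply/rowP => k; rewrite !mxE. Qed.
Lemma ImG_cplx u w : ImG (cplx u w) = w.
Proof. by apply/rowP => k; rewrite !mxE. Qed.
Lemma ReG_conj s : ReG (conjG s) = ReG s.
Proof. by apply/rowP => k; rewrite !mxE. Qed.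
Lemma ImG_conj s : ImG (conjG s) = - ImG s.
Proof. by apply/rowP => k; rewrite !mxE. Qed.
Lemma cplx_ReIm s : cplx (ReG s) (ImG s) = s.
Proof. by apply/rowP => k; rewrite !mxE; case: (s 0 k). Qed.

Lemma ReC (k : R) : complex.Re (k%:C) = k. Proof. by []. Qed.
Lemma ImC (k : R) : complex.Im (k%:C) = 0. Proof. by []. Qed.
Lemma inv2C : (2^-1 : R[i]) = (2^-1 : R)%:C.
Proof. by rewrite fmorphV rmorph_nat. Qed.
Lemma ReCmul (k : R) (z : R[i]) : complex.Re (k%:C * z) = k * complex.Re z.
Proof. by case: z => a b /=; rewrite mul0r subr0. Qed.
Lemma ImCmul (k : R) (z : R[i]) : complex.Im (k%:C * z) = k * complex.Im z.
Proof. by case: z => a b /=; rewrite mul0r addr0. Qed.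

End Cx.

Section Real.
Variables (R : rcfType) (n : nat) (G : 'M[int]_n).
Local Notation q := (@gform R n G).
Implicit Types (u w : gam R n).

Lemma gram_sym (HG : G^T = G) : (intmx R (gram_full G))^T = intmx R (gram_full G).
Proof.
rewrite /intmx map_trmx /gram_full tr_block_mx HG !trmx0; congr (map_mx _ (block_mx _ _ _ _)).
by apply/matrixP => i j; rewrite !mxE eq_sym.
Qed.

Lemma q_sym (HG : G^T = G) u w : q u w = q w u.
Proof.
rewrite /gform.
have -> : forall A : 'M[R]_1, A 0 0 = A^T 0 0 by move=> A; rewrite mxE.
by rewrite !trmx_mul trmxK gram_sym // mulmxA.
Qed.

Lemma q_diag (S M : 'M[R]_(n + 2)) (d : 'rV[R]_(n + 2)) u :
  S = intmx R (gram_full G) -> M \in unitmx -> M *m S *m M^T = diag_mx d ->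
  q u u = \sum_j ((u *m invmx M) 0 j) ^+ 2 * d 0 j.
Proof.
move=> -> uM hD.
rewrite /gform -[u in LHS](mulmxKV uM) trmx_mul.
rewrite -!mulmxA [M *m (_ *m _)]mulmxA [M *m _ *m _]mulmxA hD.
rewrite !mulmxA mul_mx_diag !mxE; apply: eq_bigr => j _; rewrite !mxE.
by rewrite expr2 mulrAC.
Qed.


Lemma q_vv_sym u : q (vv R n) u = q u (vv R n).
Proof. by rewrite q_vv q_vv_l. Qed.
Lemma q_vvs_sym u : q (vvs R n) u = q u (vvs R n).
Proof. by rewrite q_vvs q_vvs_l. Qed.
Lemma q_vv_vv : q (vv R n) (vv R n) = 0.
Proof. by rewrite q_vv rs_vv e01. Qed.
Lemma q_vvs_vvs : q (vvs R n) (vvs R n) = 0.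
Proof. by rewrite q_vvs rs_vvs e10. Qed.
Lemma q_vv_vvs : q (vv R n) (vvs R n) = 1.
Proof. by rewrite q_vvs rs_vv e00. Qed.
Lemma q_vvs_vv : q (vvs R n) (vv R n) = 1.
Proof. by rewrite q_vv rs_vvs e11. Qed.

Lemma sig_contra (HG : G^T = G) (HS : has_signature 3 (intmx R (gram_full G))) x y om :
  posdef_pair q x y -> q x om = 0 -> q y om = 0 -> 0 < q om om ->
  q om (vv R n) = 0 -> q x (vv R n) = 0 -> q y (vv R n) = 0 -> False.
Proof.
move=> Hpd Hxo Hyo Hoo Hov Hxv Hyv.
case: HS => H3 [_ [M [uM hD]]].
set N := invmx M.
pose W : 'M[R]_(4, n + 2) := \matrix_(k, j) (if k == 0 :> nat then x 0 j
   else if k == 1 :> nat then y 0 j else if k == 2 :> nat then om 0 j else vv R n 0 j).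
pose C : 'M[R]_(4, 3) := \matrix_(k, i) (W *m N) k (widen_ord H3 i).
have : kermx C != 0.
  rewrite kermx_eq0 /row_free; apply/negP => /eqP h.
  by have := rank_leq_col C; rewrite h.
case/matrix0Pn => k [j0 Hk].
set c := row k (kermx C).
have cC : c *m C = 0 by rewrite /c -row_mul mulmx_ker row0.
have c_nz : c != 0 by apply/matrix0Pn; exists 0, j0; rewrite mxE.
clearbody c.
set u := c *m W.
have [a0 [a1 [a2 [a3 [uE ha]]]]] : exists a0 a1 a2 a3 : R,
  u = (a0 *: x + a1 *: y) + a2 *: om + a3 *: vv R n /\
  (a0 = 0 -> a1 = 0 -> a2 = 0 -> a3 = 0 -> c = 0).
  exists (c 0 ord0), (c 0 (lift ord0 ord0)), (c 0 (lift ord0 (lift ord0 ord0))),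
    (c 0 (lift ord0 (lift ord0 (lift ord0 ord0)))).
  split.
    apply/rowP => j; rewrite /u !mxE !big_ord_recl big_ord0 !mxE /=.
    by rewrite addr0 !addrA.
  move=> h0 h1 h2 h3; apply/rowP => i; rewrite [RHS]mxE.
  case: i => [[|[|[|[|//]]]] Hi].
  - by rewrite -h0; congr (c 0 _); apply: val_inj.
  - by rewrite -h1; congr (c 0 _); apply: val_inj.
  - by rewrite -h2; congr (c 0 _); apply: val_inj.
  - by rewrite -h3; congr (c 0 _); apply: val_inj.
set z := u *m N.
have zlow : forall j : 'I_(n + 2), (j < 3)%N -> z 0 j = 0.
  move=> j hj; have -> : j = widen_ord H3 (Ordinal hj) by apply: val_inj.
  transitivity ((c *m C) 0 (Ordinal hj)); last by rewrite cC mxE.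
  rewrite /z /u -mulmxA !mxE; apply: eq_bigr => k' _; rewrite !mxE.
  by [].
have qE : q u u = \sum_j (z 0 j) ^+ 2 *
   (\row_(i < n + 2) (if (i < 3)%N then 1 else -1) : 'rV[R]_(n + 2)) 0 j.
  exact: (q_diag _ erefl uM hD).
have Hle : q u u <= 0.
  rewrite qE; apply: sumr_le0 => j _; rewrite [(\row_i _) 0 j]mxE.
  case: (ltnP j 3) => hj.
    by rewrite zlow // expr2 !mul0r.
  by rewrite mulrN1 oppr_le0 sqr_ge0.
pose p2 := a0 *: x + a1 *: y.
have hp2 : p2 = a0 *: x + a1 *: y by [].
have hp2o : q p2 om = 0 by rewrite hp2 q_addl !q_scalel Hxo Hyo !mulr0 addr0.
have hop2 : q om p2 = 0 by rewrite q_sym // hp2o.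
have hp2v : q p2 (vv R n) = 0 by rewrite hp2 q_addl !q_scalel Hxv Hyv !mulr0 addr0.
have hvp2 : q (vv R n) p2 = 0 by rewrite q_vv_sym.
have hp2p : 0 <= q p2 p2 /\ (q p2 p2 = 0 -> a0 = 0 /\ a1 = 0).
  case: (boolP ((a0 != 0) || (a1 != 0))) => h.
    have := Hpd a0 a1 h; rewrite -hp2 => hpos; split; first exact: ltW.
    by move=> h0; move: hpos; rewrite h0 ltxx.
  move: h; rewrite negb_or !negbK => /andP [/eqP e0 /eqP e1].
  by rewrite hp2 e0 e1 !scale0r addr0 q_0l.
rewrite -/p2 in uE; clearbody p2.
have Hpp : q u u = q p2 p2 + a2 ^+ 2 * q om om.
  rewrite uE !q_addl !q_addr !q_scalel !q_scaler hp2o hop2 hp2v hvp2.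
  rewrite q_vv_sym Hov q_vv_vv; ring.
case: hp2p => hpp0 hpp1.
have h2 : 0 <= a2 ^+ 2 * q om om by apply: mulr_ge0; [exact: sqr_ge0 | exact: ltW].
have hq0 : q p2 p2 = 0 /\ a2 ^+ 2 * q om om = 0.
  move: Hle; rewrite Hpp => Hle; split; apply/eqP; rewrite eq_le; apply/andP; split => //.
  - by rewrite -(lerD2r (a2 ^+ 2 * q om om)) add0r (le_trans Hle).
  - by rewrite -(lerD2l (q p2 p2)) addr0 (le_trans Hle).
case: hq0 => hq1 hq2.
have a2z : a2 = 0.
  move: hq2 => /eqP; rewrite mulf_eq0 (gt_eqF Hoo) orbF expf_eq0 /= => /eqP //.
case: (hpp1 hq1) => a0z a1z.
have p2z : p2 = 0 by rewrite hp2 a0z a1z !scale0r addr0.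
have quu : q u u = 0 by rewrite Hpp hq1 a2z expr2 !mul0r addr0.
have zz : z = 0.
  move: quu; rewrite qE => hs.
  have hs' : \sum_j - (z 0 j ^+ 2 * (\row_(i < n + 2) (if (i < 3)%N then 1 else -1) : 'rV[R]_(n + 2)) 0 j) = 0.
    by rewrite sumrN hs oppr0.
  have hnn : forall i : 'I_(n + 2), true ->
     0 <= - (z 0 i ^+ 2 * (\row_(i < n + 2) (if (i < 3)%N then 1 else -1) : 'rV[R]_(n + 2)) 0 i).
    move=> i _; rewrite [(\row_i _) 0 i]mxE; case: (ltnP i 3) => hi.
      by rewrite zlow // expr2 !mul0r oppr0.
    by rewrite mulrN1 opprK sqr_ge0.
  apply/rowP => j; rewrite [RHS]mxE.
  case: (ltnP j 3) => hj; first exact: zlow.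
  have := psumr_eq0P hnn hs' (i := j) isT; rewrite [(\row_i _) 0 j]mxE ltnNge hj /= mulrN1 opprK.
  by move=> /eqP; rewrite sqrf_eq0 => /eqP.
have uz : u = 0 by rewrite -(mulmxKV uM u) -/N -/z zz mul0mx.
have a3z : a3 = 0.
  have := congr1 (fun A : 'rV[R]_(n + 2) => A 0 (rshift n 0)) uE.
  rewrite uz p2z a2z scale0r !add0r /= !mxE (unsplitK (inr _ _)) !mxE /= mulr1.
  by move=> <-.
by move/eqP: c_nz; apply; apply: ha.
Qed.

Lemma sumsq_gt0 (s t : R) : (s != 0) || (t != 0) -> 0 < s ^+ 2 + t ^+ 2.
Proof.
have h0 := sqr_ge0 s; have h1 := sqr_ge0 t.
case/orP => h.
  have : 0 < s ^+ 2 by rewrite lt_def sqrf_eq0 h sqr_ge0.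
  move=> hh; lra.
have : 0 < t ^+ 2 by rewrite lt_def sqrf_eq0 h sqr_ge0.
move=> hh; lra.
Qed.

Lemma qcomb (HG : G^T = G) x y a b c d :
  q (a *: x + b *: y) (c *: x + d *: y) =
  a * c * q x x + (a * d + b * c) * q x y + b * d * q y y.
Proof.
rewrite !q_addl !q_addr !q_scalel !q_scaler (q_sym HG y x); ring.
Qed.

Lemma qcomb1 x y a b z : q (a *: x + b *: y) z = a * q x z + b * q y z.
Proof. by rewrite q_addl !q_scalel. Qed.

Lemma posdef_orth (HG : G^T = G) a b :
  q a a = q b b -> q a b = 0 -> 0 < q a a -> posdef_pair q a b.
Proof.
move=> hab hab0 hpos s t hst.
have -> : q (s *: a + t *: b) (s *: a + t *: b) = (s ^+ 2 + t ^+ 2) * q a a.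
  rewrite !q_addl !q_addr !q_scalel !q_scaler (q_sym HG b a) hab0 -hab; ring.
by apply: mulr_gt0 => //; apply: sumsq_gt0.
Qed.

End Real.

Section Part1.
Variables (R : rcfType) (n : nat) (G : 'M[int]_n).
Local Notation q := (@gform R n G).
Local Open Scope complex_scope.

Lemma exists_sigma (HG : G^T = G) (HS : has_signature 3 (intmx R (gram_full G)))
  x y om : in_Gr21 G x y om -> q om (vv R n) = 0 ->
  exists s : gam R[i] n, period G s /\ same_oplane (x, y) (ReG s, ImG s) /\
      q (ImG s) (vv R n) = 0 /\ q (ReG s) (vv R n) != 0.
Proof.
case=> Hpd [Hxo [Hyo Hoo]] Hov.
pose al := q x (vv R n); have alE : q x (vv R n) = al by [].
pose be := q y (vv R n); have beE : q y (vv R n) = be by [].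
clearbody al be.
have hab : (al != 0) || (be != 0).
  rewrite -negb_and; apply/negP => /andP [/eqP h1 /eqP h2].
  by apply: (sig_contra HG HS Hpd Hxo Hyo Hoo Hov); rewrite ?alE ?beE.
have sab := sumsq_gt0 hab.
pose P := q x x; pose Mx := q x y; pose Q := q y y.
have qc : forall a b c d, q (a *: x + b *: y) (c *: x + d *: y) =
  a * c * P + (a * d + b * c) * Mx + b * d * Q by move=> *; rewrite qcomb.
clearbody P Mx Q.
pose N2 := be * be * P + (be * (- al) + (- al) * be) * Mx + (- al) * (- al) * Q.
have N2E : N2 = be * be * P + (be * (- al) + (- al) * be) * Mx + (- al) * (- al) * Q by [].
have N2pos : 0 < N2.
  have : (be != 0) || (- al != 0) by rewrite oppr_eq0 orbC.
  by move/Hpd; rewrite qc.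
clearbody N2.
pose num := al * be * P + (al * (- al) + be * be) * Mx + be * (- al) * Q.
have numE : num = al * be * P + (al * (- al) + be * be) * Mx + be * (- al) * Q by [].
pose t := num / N2.
have tN2 : t * N2 = num by rewrite /t mulfVK // gt_eqF.
clearbody t num.
pose c0 := al - t * be; pose d0 := be + t * al.
have c0E : c0 = al - t * be by []. have d0E : d0 = be + t * al by [].
clearbody c0 d0.
have hcd : (c0 != 0) || (d0 != 0).
  rewrite -negb_and; apply/negP => /andP [/eqP h1 /eqP h2].
  have : al ^+ 2 + be ^+ 2 = al * c0 + be * d0 by rewrite c0E d0E; ring.
  by rewrite h1 h2 !mulr0 addr0 => h; move: sab; rewrite h ltxx.
pose N1 := c0 * c0 * P + (c0 * d0 + d0 * c0) * Mx + d0 * d0 * Q.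
have N1E : N1 = c0 * c0 * P + (c0 * d0 + d0 * c0) * Mx + d0 * d0 * Q by [].
have N1pos : 0 < N1 by move: (Hpd c0 d0 hcd); rewrite qc.
clearbody N1.
pose lam := Num.sqrt (N2 / N1).
have lampos : 0 < lam by rewrite sqrtr_gt0 divr_gt0.
have lam2 : lam ^+ 2 = N2 / N1 by rewrite sqr_sqrtr // ltW // divr_gt0.
clearbody lam.
pose e1 := (lam * c0) *: x + (lam * d0) *: y.
pose e2 := (- be) *: x + al *: y.
have q11 : q e1 e1 = N2.
  rewrite /e1 qc.
  transitivity (lam ^+ 2 * N1); first by rewrite N1E; ring.
  by rewrite lam2 divfK // gt_eqF.
have q22 : q e2 e2 = N2 by rewrite /e2 qc N2E; ring.
have q12 : q e1 e2 = 0.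
  rewrite /e1 /e2 qc.
  transitivity (- lam * (num - t * N2)); first by rewrite numE N2E c0E d0E; ring.
  by rewrite tN2 subrr mulr0.
have q21 : q e2 e1 = 0 by rewrite q_sym.
have e2v : q e2 (vv R n) = 0 by rewrite /e2 qcomb1 alE beE; ring.
have e1v : q e1 (vv R n) = lam * (al ^+ 2 + be ^+ 2).
  by rewrite /e1 qcomb1 alE beE c0E d0E; ring.
have e1E : e1 = (lam * c0) *: x + (lam * d0) *: y by [].
have e2E : e2 = (- be) *: x + al *: y by [].
clearbody e1 e2.
exists (cplx e1 e2).
rewrite ReG_cplx ImG_cplx; split; last split; last split.
- split.
    by rewrite (cplxE (gform G _ _)) Re_qC Im_qC ReG_cplx ImG_cplx q11 q22 q12 q21 subrr addr0.
  exists (q (e1 + e1) (e1 + e1)); split.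
    rewrite (cplxE (gform G _ _)) Re_qC Im_qC ReG_add ImG_add ReG_conj ImG_conj.
    by rewrite ReG_cplx ImG_cplx addrN q_0l q_0r q_0l subr0 addr0.
  rewrite !q_addl !q_addr q11; lra.
- exists (lam * c0), (lam * d0), (- be), al; split; first exact: e1E.
  split; first exact: e2E.
  have -> : lam * c0 * al - lam * d0 * - be = lam * (al ^+ 2 + be ^+ 2).
    by rewrite c0E d0E; ring.
  exact: mulr_gt0.
- exact: e2v.
- by rewrite e1v mulf_neq0 // gt_eqF.
Qed.

End Part1.

Section Part2.
Variables (R : rcfType) (n : nat) (G : 'M[int]_n).
Local Notation q := (@gform R n G).
Local Notation vv := (vv R n).
Local Notation vvs := (vvs R n).
Local Open Scope complex_scope.
Implicit Types (u w : gam R n).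

Lemma q_pr_pr' u w : q (pr u) (pr w) = q u w - q u vvs * q w vv - q u vv * q w vvs.
Proof. by rewrite q_pr_pr q_vv q_vvs q_vv q_vvs. Qed.
Lemma q_pr_vv u : q (pr u) vv = 0. Proof. by rewrite q_vv rs_pr mxE. Qed.
Lemma q_pr_vvs u : q (pr u) vvs = 0. Proof. by rewrite q_vvs rs_pr mxE. Qed.
Lemma q_vv_pr u : q vv (pr u) = 0. Proof. by rewrite q_vv_l rs_pr mxE. Qed.
Lemma q_vvs_pr u : q vvs (pr u) = 0. Proof. by rewrite q_vvs_l rs_pr mxE. Qed.
Lemma rs_coordq u : rsubmx u = q u vvs *: e0 R + q u vv *: e1 R.
Proof. by rewrite q_vv q_vvs -rs_coord. Qed.

Lemma ReG_sd s om B :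
  ReG (sigma_dual G s om B) = (q (ReG s) vv)^-1 *:
    (pr B - (2^-1 * (q B B - q om om)) *: vv + vvs).
Proof.
rewrite /sigma_dual /= ReG_scale ReC ImC scale0r subr0.
rewrite ReG_add ReG_sub ReG_pr ReG_cplx ReG_scale ImG_vv ReG_vv ReG_vvs scaler0 subr0.
by rewrite inv2C ReCmul Re_qC ReG_cplx ImG_cplx.
Qed.

Lemma ImG_sd s om B :
  ImG (sigma_dual G s om B) = (q (ReG s) vv)^-1 *:
    (pr om - (2^-1 * (q B om + q om B)) *: vv).
Proof.
rewrite /sigma_dual /= ImG_scale ReC ImC scale0r addr0.
rewrite ImG_add ImG_sub ImG_pr ImG_cplx ImG_scale ImG_vv ReG_vv ImG_vvs scaler0 add0r addr0.
by rewrite inv2C ImCmul Im_qC ReG_cplx ImG_cplx.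
Qed.

Lemma ReG_Bd s B :
  ReG (Bom_dual G s B) = (q (ReG s) vv)^-1 *: (pr (ReG s) - q (ReG s) B *: vv).
Proof.
rewrite /Bom_dual ReG_scale ReC ImC scale0r subr0.
rewrite ReG_sub ReG_pr ReG_scale ImG_vv ReG_vv scaler0 subr0.
by rewrite Re_qC ReG_cplx ImG_cplx q_0r subr0.
Qed.

Lemma ImG_Bd s B :
  ImG (Bom_dual G s B) = (q (ReG s) vv)^-1 *: (pr (ImG s) - q (ImG s) B *: vv).
Proof.
rewrite /Bom_dual ImG_scale ReC ImC scale0r addr0.
rewrite ImG_sub ImG_pr ImG_scale ImG_vv ReG_vv scaler0 add0r.
by rewrite Im_qC ReG_cplx ImG_cplx q_0r add0r.
Qed.

Lemma period_of (HG : G^T = G) t :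
  q (ReG t) (ReG t) = q (ImG t) (ImG t) -> q (ReG t) (ImG t) = 0 ->
  0 < q (ReG t) (ReG t) -> period G t.
Proof.
move=> h1 h2 h3; split.
  by rewrite (cplxE (gform G _ _)) Re_qC Im_qC h1 subrr (q_sym HG (ImG t)) h2 addr0.
exists (q (ReG t + ReG t) (ReG t + ReG t)); split.
  rewrite (cplxE (gform G _ _)) Re_qC Im_qC ReG_add ImG_add ReG_conj ImG_conj.
  by rewrite addrN q_0l q_0r q_0l subr0 addr0.
rewrite !q_addl !q_addr; lra.
Qed.

Lemma period_facts (HG : G^T = G) t : period G t ->
  [/\ q (ReG t) (ReG t) = q (ImG t) (ImG t), q (ReG t) (ImG t) = 0 &
  0 < q (ReG t) (ReG t)].
Proof.
case=> h1 [r0 [h2 h3]].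
have hre := congr1 (@complex.Re R) h1; have him := congr1 (@complex.Im R) h1.
have hre2 := congr1 (@complex.Re R) h2.
rewrite Re_qC /= in hre; rewrite Im_qC /= (q_sym HG (ImG t)) in him.
rewrite Re_qC ReG_add ImG_add ReG_conj ImG_conj addrN q_0l subr0 /= in hre2.
split.
- by apply/eqP; rewrite -subr_eq0 hre.
- by move: him => h; lra.
- by move: hre2; rewrite !q_addl !q_addr => h; lra.
Qed.

Definition Fmap B u : gamU R n := xi (embU u - q u B *: ww R n).

Ltac qexp := rewrite ?(q_scalel, q_scaler, q_addl, q_addr, q_oppl, q_oppr, q_pr_pr',
  q_pr_vv, q_vv_pr, q_pr_vvs, q_vvs_pr, q_vv_vv, q_vvs_vvs, q_vv_vvs, q_vvs_vv, q_0l, q_0r).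
Ltac proj := rewrite ?(P1D, P1N, P1Z, P2D, P2N, P2Z, P3D, P3N, P3Z, P1_emb, P2_emb, P3_emb,
  P1_ww, P2_ww, P3_ww, P1_wws, P2_wws, P3_wws, P1_xi, P2_xi, P3_xi)
  ?(lsD, lsN, lsZ, rsD, rsN, rsZ, ls_pr, rs_pr, ls_vv, ls_vvs, rs_vv, rs_vvs).
Ltac rvn := apply/rowP => ?; rewrite !mxE.
Ltac rv2 := apply/rowP; case => [[|[|//]] ?]; rewrite !mxE /=.

Lemma Fmap_lin B x y a b : Fmap B (a *: x + b *: y) = a *: Fmap B x + b *: Fmap B y.
Proof.
rewrite /Fmap; apply: gamU_ext; qexp; proj.
- by rvn; ring.
- by rv2; ring.
- by rv2; ring.
Qed.

Lemma part2 (HG : G^T = G) x y om B s :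
  in_Gr21 G x y om ->
  (exists a : R, om = pr om + a *: vv) ->
  (exists a : R, B = pr B + a *: vv) ->
  period G s -> same_oplane (x, y) (ReG s, ImG s) ->
  gform G (ImG s) vv = 0 -> gform G (ReG s) vv != 0 ->
      let sd := sigma_dual G s om B in
      let Bd := ReG (Bom_dual G s B) in
      let omd := ImG (Bom_dual G s B) in
      period G sd /\
      in_Gr21 G (ReG sd) (ImG sd) omd /\
      same_pair (xi_tilde (gammaG G x y om B))
                (gammaG G (ReG sd) (ImG sd) omd Bd).
Proof.
move=> [Hpd [Hxo [Hyo Hoo]]] [ao Hom] [bo HB] Hper [a [b [c [d [He1 [He2 Hdet]]]]]] He2v He1v sd Bd omd.
rewrite /= in He1 He2 Hdet.
have hov : q om vv = 0 by rewrite Hom; qexp; rewrite mulr0 addr0.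
have hbv : q B vv = 0 by rewrite HB; qexp; rewrite mulr0 addr0.
have [h11 h12 hpos] := period_facts HG Hper.
have hRs := ReG_sd s om B; have hIs := ImG_sd s om B.
have hRb := ReG_Bd s B; have hIb := ImG_Bd s B.
rewrite /sd /Bd /omd; clear sd Bd omd.
have ho1 : q (ReG s) om = 0 by rewrite He1 qcomb1 Hxo Hyo; ring.
have ho2 : q (ImG s) om = 0 by rewrite He2 qcomb1 Hxo Hyo; ring.
have FE : forall u, xi (embU u - q u B *: ww R n) = Fmap B u by [].
set S1 := ReG (sigma_dual G s om B) in hRs *.
set S2 := ImG (sigma_dual G s om B) in hIs *.
set Bd := ReG (Bom_dual G s B) in hRb *.
set omd := ImG (Bom_dual G s B) in hIb *.
have S1def : ReG (sigma_dual G s om B) = S1 by [].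
have S2def : ImG (sigma_dual G s om B) = S2 by [].
clearbody S1 S2 Bd omd.
set e1 := ReG s in He1 h11 h12 hpos hRs hIs hRb hIb ho1 He1v.
set e2 := ImG s in He2 h11 h12 hpos hRs hIs hRb hIb ho2 He2v.
clearbody e1 e2.
pose r := q e1 vv; have rE : q e1 vv = r by [].
rewrite rE in hRs hIs hRb hIb He1v; clearbody r.
have r2 : r ^+ 2 != 0 by rewrite expf_neq0.
have r2p : 0 < r ^+ 2 by rewrite lt_def r2 sqr_ge0.
have h21 : q e2 e1 = 0 by rewrite q_sym.
have f11 : q S1 S1 = q om om / r ^+ 2.
  rewrite hRs; qexp.
  rewrite ?(q_sym HG B e1) ?(q_sym HG B e2) ?(q_sym HG om B) ?(q_sym HG om e1) ?(q_sym HG om e2);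
  rewrite ?hbv ?hov ?He2v ?ho1 ?ho2 ?h12 ?h21 ?rE.
  by field.
have f22 : q S2 S2 = q om om / r ^+ 2.
  rewrite hIs; qexp.
  rewrite ?(q_sym HG B e1) ?(q_sym HG B e2) ?(q_sym HG om B) ?(q_sym HG om e1) ?(q_sym HG om e2);
  rewrite ?hbv ?hov ?He2v ?ho1 ?ho2 ?h12 ?h21 ?rE.
  by field.
have f12 : q S1 S2 = 0.
  rewrite hRs hIs; qexp.
  rewrite ?(q_sym HG B e1) ?(q_sym HG B e2) ?(q_sym HG om B) ?(q_sym HG om e1) ?(q_sym HG om e2);
  rewrite ?hbv ?hov ?He2v ?ho1 ?ho2 ?h12 ?h21 ?rE.
  by field.
have g1 : q S1 omd = 0.
  rewrite hRs hIb; qexp.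
  rewrite ?(q_sym HG B e1) ?(q_sym HG B e2) ?(q_sym HG om B) ?(q_sym HG om e1) ?(q_sym HG om e2);
  rewrite ?hbv ?hov ?He2v ?ho1 ?ho2 ?h12 ?h21 ?rE.
  by field.
have g2 : q S2 omd = 0.
  rewrite hIs hIb; qexp.
  rewrite ?(q_sym HG B e1) ?(q_sym HG B e2) ?(q_sym HG om B) ?(q_sym HG om e1) ?(q_sym HG om e2);
  rewrite ?hbv ?hov ?He2v ?ho1 ?ho2 ?h12 ?h21 ?rE.
  by field.
have g3 : q omd omd = q e1 e1 / r ^+ 2.
  rewrite hIb h11; qexp.
  rewrite ?(q_sym HG B e1) ?(q_sym HG B e2) ?(q_sym HG om B) ?(q_sym HG om e1) ?(q_sym HG om e2);
  rewrite ?hbv ?hov ?He2v ?ho1 ?ho2 ?h12 ?h21 ?rE.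
  by field.
have k1 : q S1 Bd = - q B vvs / r.
  rewrite hRs hRb; qexp.
  rewrite ?(q_sym HG B e1) ?(q_sym HG B e2) ?(q_sym HG om B) ?(q_sym HG om e1) ?(q_sym HG om e2);
  rewrite ?hbv ?hov ?He2v ?ho1 ?ho2 ?h12 ?h21 ?rE.
  by field.
have k2 : q S2 Bd = - q om vvs / r.
  rewrite hIs hRb; qexp.
  rewrite ?(q_sym HG B e1) ?(q_sym HG B e2) ?(q_sym HG om B) ?(q_sym HG om e1) ?(q_sym HG om e2);
  rewrite ?hbv ?hov ?He2v ?ho1 ?ho2 ?h12 ?h21 ?rE.
  by field.
have k3 : q omd Bd = - q e2 vvs / r.
  rewrite hIb hRb; qexp.
  rewrite ?(q_sym HG B e1) ?(q_sym HG B e2) ?(q_sym HG om B) ?(q_sym HG om e1) ?(q_sym HG om e2);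
  rewrite ?hbv ?hov ?He2v ?ho1 ?ho2 ?h12 ?h21 ?rE.
  by field.
have k4 : q Bd Bd = (q e1 e1 - 2 * r * q e1 vvs) / r ^+ 2.
  rewrite hRb; qexp.
  rewrite ?(q_sym HG B e1) ?(q_sym HG B e2) ?(q_sym HG om B) ?(q_sym HG om e1) ?(q_sym HG om e2);
  rewrite ?hbv ?hov ?He2v ?ho1 ?ho2 ?h12 ?h21 ?rE.
  by field.
split.
  apply: period_of => //; rewrite ?S1def ?S2def ?f11 ?f22 ?f12 //.
  exact: divr_gt0.
split.
  split; first apply: posdef_orth => //; first by rewrite f11 f22.
    by rewrite f11 divr_gt0.
  split; first exact: g1.
  split; first exact: g2.
  by rewrite g3 divr_gt0.
rewrite /same_pair /xi_tilde /gammaG /gammaH1 /gammaH2 /=.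
split.
- exists r^-1, 0, 0, r^-1 => /=; split; last split.
  + rewrite k1 hRs; apply: gamU_ext; proj.
    * by rvn; field.
    * by rv2; field.
    * by rewrite !rs_coordq hbv; rv2; field.
  + rewrite k2 hIs; apply: gamU_ext; proj.
    * by rvn; field.
    * by rv2; rewrite (q_sym HG om B); field.
    * by rewrite !rs_coordq hov; rv2; field.
  + by rewrite mul0r subr0 -expr2 lt_def sqr_ge0 andbT expf_neq0 // invr_eq0.
- exists (r^-1 * a), (r^-1 * b), (r^-1 * c), (r^-1 * d) => /=; split; last split.
  + rewrite !FE -!scalerA -scalerDr -Fmap_lin -He1 g3 k4 hRb /Fmap.
    apply: gamU_ext; qexp; proj.
    * by rvn; field.
    * by rv2; field.
    * by rewrite !rs_coordq rE; rv2; field.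
  + rewrite !FE -!scalerA -scalerDr -Fmap_lin -He2 k3 hIb /Fmap.
    apply: gamU_ext; qexp; proj.
    * by rvn; field.
    * by rv2; field.
    * by rewrite !rs_coordq He2v; rv2; field.
  + have -> : r^-1 * a * (r^-1 * d) - r^-1 * b * (r^-1 * c) = (a * d - b * c) / r ^+ 2.
      by field.
    exact: divr_gt0.
Qed.

End Part2.

Theorem mainTheorem14 (R : rcfType) (n : nat) (G : 'M[int]_n)
  (x y om B : gam R n) :
  G^T = G ->
  has_signature 3 (intmx R (gram_full G)) ->
  in_Gr21 G x y om ->
  (exists a : R, om = pr om + a *: vv R n) ->
  (exists a : R, B = pr B + a *: vv R n) ->
  (exists s : gam R[i] n,
      period G s /\ same_oplane (x, y) (ReG s, ImG s) /\
      gform G (ImG s) (vv R n) = 0 /\ gform G (ReG s) (vv R n) != 0)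
  /\
  (forall s : gam R[i] n,
      period G s -> same_oplane (x, y) (ReG s, ImG s) ->
      gform G (ImG s) (vv R n) = 0 -> gform G (ReG s) (vv R n) != 0 ->
      let sd := sigma_dual G s om B in
      let Bd := ReG (Bom_dual G s B) in
      let omd := ImG (Bom_dual G s B) in
      period G sd /\
      in_Gr21 G (ReG sd) (ImG sd) omd /\
      same_pair (xi_tilde (gammaG G x y om B))
                (gammaG G (ReG sd) (ImG sd) omd Bd)).
Proof.
move=> HG HS Hgr Hom HB; split.
  have hov : gform G om (vv R n) = 0.
    case: Hom => ao ->; rewrite q_addl q_scalel q_pr_vv q_vv_vv; ring.
  exact: (exists_sigma HG HS Hgr hov).
move=> s Hper Hso Hi Hr.
exact: (part2 HG Hgr Hom HB Hper Hso Hi Hr).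
Qed.
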